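(* Let $(A,\mathfrak m)$ be a local Noetherian normal integral domain, and let $I_1,I_2,\dots$ be nonzero prime ideals of $A$ with $\lim_{n\to\infty}I_n=0$ in the $\mathfrak m$-adic topology. Set $P=\prod_n A/I_n$ and $S=\bigoplus_n A/I_n\subseteq P$. If $M$ is a finitely generated $A$-module with $\operatorname{Hom}_A(M,A/I_n)\cong A/I_n$ for all $n$, then $\operatorname{Hom}_A(M,P/S)\cong P/S$.
   Context: $\lim_{n\to\infty}I_n=0$ in the $\mathfrak m$-adic topology means: for every $i\ge1$ there is $n_i$ such that $I_n\subseteq\mathfrak m^i$ for all $n\ge n_i$. *)

(* Defs.v *)
From HB Require Import structures.
From mathcomp Require Import all_boot all_algebra.
From mathcomp Require Import boolp.
From Stdlib Require Import ClassicalEpsilon.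
Set Implicit Arguments.
Unset Strict Implicit.
Unset Printing Implicit Defensive.
Import GRing.Theory.
Local Open Scope ring_scope.

Section Quotient.
Variables (R : pzRingType) (V : lmodType R) (W : V -> Prop).

Definition span_of (x : V) : Prop :=
  exists n (c : 'I_n -> R) (w : 'I_n -> V),
    (forall i, W (w i)) /\ x = \sum_(i < n) c i *: w i.

Lemma span_of0 : span_of 0.
Proof. by exists 0%N, (fun _ => 0), (fun _ => 0); split; [case | rewrite big_ord0]. Qed.

Lemma span_ofD x y : span_of x -> span_of y -> span_of (x + y).
Proof.
move=> [n [c [w [Hw ->]]]] [m [d [u [Hu ->]]]].
exists (n + m)%N, (fun i => match split i with inl j => c j | inr j => d j end),
  (fun i => match split i with inl j => w j | inr j => u j end); split.
  by move=> i; case: (split i).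
rewrite big_split_ord /=; congr (_ + _); apply: eq_bigr => i _.
  by have /= -> := unsplitK (inl i : 'I_n + 'I_m).
by have /= -> := unsplitK (inr i : 'I_n + 'I_m).
Qed.

Lemma span_ofZ a x : span_of x -> span_of (a *: x).
Proof.
move=> [n [c [w [Hw ->]]]]; exists n, (fun i => a * c i), w; split => //.
by rewrite scaler_sumr; apply: eq_bigr => i _; rewrite scalerA.
Qed.

Lemma span_ofN x : span_of x -> span_of (- x).
Proof. by move=> /(span_ofZ (-1)); rewrite scaleN1r. Qed.

Definition qrel (x y : V) : Prop := span_of (x - y).

Lemma qrel_refl x : qrel x x.
Proof. by rewrite /qrel subrr; apply: span_of0. Qed.

Lemma qrel_sym x y : qrel x y -> qrel y x.
Proof. by rewrite /qrel => /span_ofN; rewrite opprB. Qed.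

Lemma qrel_trans x y z : qrel x y -> qrel y z -> qrel x z.
Proof.
by rewrite /qrel => H1 H2; have := span_ofD H1 H2; rewrite addrA subrK.
Qed.

Definition canon (x : V) : V := epsilon (inhabits x) (qrel x).

Lemma qrel_canon x : qrel x (canon x).
Proof. by rewrite /canon; apply: epsilon_spec; exists x; apply: qrel_refl. Qed.

Lemma canon_eq x y : qrel x y -> canon x = canon y.
Proof.
move=> Hxy; rewrite /canon.
have -> : qrel x = qrel y.
  apply: funext => z; apply: propext; split => H.
    exact: qrel_trans (qrel_sym Hxy) H.
  exact: qrel_trans Hxy H.
by congr epsilon; apply: proof_irrelevance.
Qed.

Lemma canon_idem x : canon (canon x) == canon x.
Proof. by apply/eqP; apply/esym/canon_eq/qrel_canon. Qed.

(* the quotient module V / <W>, elements are canonical representatives *)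
Record qmod := QMod { qval : V; _ : canon qval == qval }.
HB.instance Definition _ := [isSub for qval].
HB.instance Definition _ := [Choice of qmod by <:].

Definition qpi (x : V) : qmod := QMod (canon_idem x).

Lemma qpi_eq x y : qrel x y -> qpi x = qpi y.
Proof. by move=> H; apply: val_inj; rewrite /= (canon_eq H). Qed.

Lemma qvalK u : qpi (qval u) = u.
Proof. by case: u => x Hx; apply: val_inj => /=; apply/eqP. Qed.

Lemma qrel_qval x : qrel (qval (qpi x)) x.
Proof. exact/qrel_sym/qrel_canon. Qed.

Definition qzero := qpi 0.
Definition qadd u v := qpi (qval u + qval v).
Definition qopp u := qpi (- qval u).
Definition qscale a u := qpi (a *: qval u).

Lemma qaddE x y : qadd (qpi x) (qpi y) = qpi (x + y).
Proof.
apply: qpi_eq; rewrite /qrel opprD addrACA.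
by apply: span_ofD; apply: qrel_qval.
Qed.

Lemma qoppE x : qopp (qpi x) = qpi (- x).
Proof. by apply: qpi_eq; rewrite /qrel -opprD; apply/span_ofN/qrel_qval. Qed.

Lemma qscaleE a x : qscale a (qpi x) = qpi (a *: x).
Proof. by apply: qpi_eq; rewrite /qrel -scalerBr; apply/span_ofZ/qrel_qval. Qed.

Lemma qaddA : associative qadd.
Proof.
move=> u v w; rewrite -[u]qvalK -[v]qvalK -[w]qvalK.
by rewrite !qaddE addrA.
Qed.

Lemma qaddC : commutative qadd.
Proof. by move=> u v; rewrite -[u]qvalK -[v]qvalK !qaddE addrC. Qed.

Lemma qadd0 : left_id qzero qadd.
Proof. by move=> u; rewrite -[u]qvalK /qzero qaddE add0r. Qed.

Lemma qaddN : left_inverse qzero qopp qadd.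
Proof. by move=> u; rewrite -[u]qvalK qoppE qaddE addNr. Qed.

HB.instance Definition _ := GRing.isZmodule.Build qmod qaddA qaddC qadd0 qaddN.

Lemma qaddE' x y : qpi x + qpi y = qpi (x + y).
Proof. exact: qaddE. Qed.

Lemma qscaleA a b u : qscale a (qscale b u) = qscale (a * b) u.
Proof. by rewrite -[u]qvalK !qscaleE scalerA. Qed.

Lemma qscale1 : left_id 1 qscale.
Proof. by move=> u; rewrite -[u]qvalK qscaleE scale1r. Qed.

Lemma qscaleDr : right_distributive qscale +%R.
Proof.
move=> a u v; rewrite -[u]qvalK -[v]qvalK.
by rewrite qaddE' !qscaleE qaddE' scalerDr.
Qed.

Lemma qscaleDl v : {morph qscale^~ v : a b / a + b}.
Proof.
by move=> a b; rewrite -[v]qvalK !qscaleE qaddE' scalerDl.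
Qed.

HB.instance Definition _ :=
  GRing.Zmodule_isLmodule.Build R qmod qscaleA qscale1 qscaleDr qscaleDl.

End Quotient.

Section Product.
Variables (R : pzRingType) (F : nat -> lmodType R).

Definition dprod := forall n, F n.
HB.instance Definition _ := gen_eqMixin dprod.
HB.instance Definition _ := gen_choiceMixin dprod.

Definition pzero : dprod := fun n => 0.
Definition padd (x y : dprod) : dprod := fun n => x n + y n.
Definition popp (x : dprod) : dprod := fun n => - x n.
Definition pscale (a : R) (x : dprod) : dprod := fun n => a *: x n.

Lemma paddA : associative padd.
Proof. by move=> x y z; apply: functional_extensionality_dep => n; rewrite /padd addrA. Qed.
Lemma paddC : commutative padd.
Proof. by move=> x y; apply: functional_extensionality_dep => n; rewrite /padd addrC. Qed.
Lemma padd0 : left_id pzero padd.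
Proof. by move=> x; apply: functional_extensionality_dep => n; rewrite /padd add0r. Qed.
Lemma paddN : left_inverse pzero popp padd.
Proof. by move=> x; apply: functional_extensionality_dep => n; rewrite /padd addNr. Qed.

HB.instance Definition _ := GRing.isZmodule.Build dprod paddA paddC padd0 paddN.

Lemma pscaleA a b x : pscale a (pscale b x) = pscale (a * b) x.
Proof. by apply: functional_extensionality_dep => n; rewrite /pscale scalerA. Qed.
Lemma pscale1 : left_id 1 pscale.
Proof. by move=> x; apply: functional_extensionality_dep => n; rewrite /pscale scale1r. Qed.
Lemma pscaleDr : right_distributive pscale +%R.
Proof. by move=> a x y; apply: functional_extensionality_dep => n; rewrite /pscale /= /padd scalerDr. Qed.
Lemma pscaleDl x : {morph pscale^~ x : a b / a + b}.
Proof. by move=> a b; apply: functional_extensionality_dep => n; rewrite /pscale /= /padd scalerDl. Qed.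

HB.instance Definition _ :=
  GRing.Zmodule_isLmodule.Build R dprod pscaleA pscale1 pscaleDr pscaleDl.

Definition dsum (x : dprod) : Prop := exists N, forall n, (N <= n)%N -> x n = 0.

End Product.

(* Hom_A(M, N) ~= N as A-modules: an A-linear bijection between the module  *)
(* of A-linear maps M -> N (pointwise operations) and N.                    *)
Definition hom_iso_self (R : pzRingType) (M N : lmodType R) : Prop :=
  exists Phi : {linear M -> N} -> N,
    bijective Phi /\
    (forall f g h : {linear M -> N}, (forall x, h x = f x + g x) ->
       Phi h = Phi f + Phi g) /\
    (forall (a : R) (f h : {linear M -> N}), (forall x, h x = a *: f x) ->
       Phi h = a *: Phi f).

Definition finitely_generated (R : pzRingType) (M : lmodType R) : Prop :=
  exists s : seq M, forall x : M,
    exists c : 'I_(size s) -> R, x = \sum_(i < size s) c i *: s`_i.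

Section Ideals.
Variable A : comUnitRingType.

Definition is_ideal (I : A -> Prop) : Prop :=
  I 0 /\ (forall x y, I x -> I y -> I (x + y)) /\ (forall a x, I x -> I (a * x)).

Definition is_prime_ideal (I : A -> Prop) : Prop :=
  is_ideal I /\ ~ I 1 /\ (forall x y, I (x * y) -> I x \/ I y).

Definition is_maximal_ideal (I : A -> Prop) : Prop :=
  is_ideal I /\ ~ I 1 /\
  (forall J, is_ideal J -> (forall x, I x -> J x) -> (forall x, J x <-> I x) \/ J 1).

Definition local_ring_with (m : A -> Prop) : Prop :=
  is_maximal_ideal m /\ (forall J, is_maximal_ideal J -> forall x, J x <-> m x).

Definition noetherian_ring : Prop :=
  forall I : A -> Prop, is_ideal I ->
    exists s : seq A, forall x, I x <->
      exists c : 'I_(size s) -> A, x = \sum_(i < size s) c i * s`_i.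

Definition ideal_mul (I J : A -> Prop) (x : A) : Prop :=
  exists n (a b : 'I_n -> A), (forall k, I (a k)) /\ (forall k, J (b k)) /\
    x = \sum_(k < n) a k * b k.

Fixpoint ideal_pow (I : A -> Prop) (i : nat) : A -> Prop :=
  if i is i'.+1 then ideal_mul (ideal_pow I i') I else (fun _ => True).

Definition madic_lim0 (m : A -> Prop) (I : nat -> A -> Prop) : Prop :=
  forall i, (1 <= i)%N -> exists ni, forall n, (ni <= n)%N ->
    forall x, I n x -> ideal_pow m i x.

End Ideals.

Definition normal_domain (A : idomainType) : Prop :=
  forall z : {fraction A},
    (exists p : {poly A}, p \is monic /\ root (map_poly (@tofrac A) p) z) ->
    exists a : A, z = @tofrac A a.

Definition quot_ring_mod (A : comUnitRingType) (I : A -> Prop) : lmodType A :=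
  @qmod A A^o I.

(* Main.v *)
Require Import Defs.
From HB Require Import structures.
From mathcomp Require Import all_boot all_algebra.
From mathcomp Require Import boolp.
Import GRing.Theory.
Set Implicit Arguments.
Unset Strict Implicit.
Local Open Scope ring_scope.

Definition mklin (R : pzRingType) (U V : lmodType R) (f : U -> V) (H : linear f)
  : {linear U -> V} := HB.pack f (GRing.isLinear.Build R U V *:%R f H).

Lemma mklinE (R : pzRingType) (U V : lmodType R) (f : U -> V) (H : linear f) x :
  mklin H x = f x.
Proof. by []. Qed.

Lemma lin_ext (R : pzRingType) (U V : lmodType R) (f g : {linear U -> V}) :
  (forall x, f x = g x) -> f = g.
Proof.
move=> H.
have E : (f : U -> V) = g by apply: funext.
case: f g H E => [f cf] [g cg] /= _ E.
subst g. congr GRing.Linear.Pack.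
case: cf cg => [a b] [c d].
case: a c => [a] [c]; case: b d => [b] [d].
have -> : a = c by apply: Prop_irrelevance.
by have -> : b = d by apply: Prop_irrelevance.
Qed.

Section QuotLemmas.
Variables (R : pzRingType) (V : lmodType R) (W : V -> Prop).

Lemma qpi_rel x y : qpi W x = qpi W y -> qrel W x y.
Proof.
move=> /(congr1 val) /= E.
apply: qrel_trans (qrel_canon W x) _.
rewrite E; exact: qrel_sym (qrel_canon W y).
Qed.

Lemma qpi0 : qpi W 0 = 0. Proof. by []. Qed.

Lemma qpiD x y : qpi W (x + y) = qpi W x + qpi W y.
Proof. by rewrite qaddE'. Qed.

Lemma qpiZ a x : qpi W (a *: x) = a *: qpi W x.
Proof. by rewrite -qscaleE. Qed.

Lemma qpi_sum (J : Type) (r : seq J) (Pr : pred J) (F : J -> V) :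
  qpi W (\sum_(i <- r | Pr i) F i) = \sum_(i <- r | Pr i) qpi W (F i).
Proof. exact: (big_morph (qpi W) qpiD qpi0). Qed.

End QuotLemmas.

Section DprodLemmas.
Variables (R : pzRingType) (F : nat -> lmodType R).
Local Notation P := (dprod F).

Lemma dprodD (x y : P) n : (x + y) n = x n + y n. Proof. by []. Qed.
Lemma dprodN (x : P) n : (- x) n = - x n. Proof. by []. Qed.
Lemma dprodB (x y : P) n : (x - y) n = x n - y n. Proof. by []. Qed.
Lemma dprodZ a (x : P) n : (a *: x) n = a *: x n. Proof. by []. Qed.
Lemma dprod0 n : (0 : P) n = 0. Proof. by []. Qed.

Lemma dprod_sum (J : Type) (r : seq J) (Pr : pred J) (G : J -> P) n :
  (\sum_(i <- r | Pr i) G i) n = \sum_(i <- r | Pr i) G i n.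
Proof. exact: (big_morph (fun x : P => x n) (fun x y => dprodD x y n) (dprod0 n)). Qed.

Lemma dprod_ext (x y : P) : (forall n, x n = y n) -> x = y.
Proof. exact: functional_extensionality_dep. Qed.

Lemma dsum0 : dsum (0 : P). Proof. by exists 0%N. Qed.

Lemma dsumD (x y : P) : dsum x -> dsum y -> dsum (x + y).
Proof.
move=> [N1 H1] [N2 H2]; exists (maxn N1 N2) => n Hn.
rewrite dprodD H1 ?H2 ?addr0 //.
  exact: leq_trans (leq_maxr _ _) Hn.
exact: leq_trans (leq_maxl _ _) Hn.
Qed.

Lemma dsumZ a (x : P) : dsum x -> dsum (a *: x).
Proof. by move=> [N H]; exists N => n Hn; rewrite dprodZ H // scaler0. Qed.

Lemma dsumN (x : P) : dsum x -> dsum (- x).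
Proof. by move=> [N H]; exists N => n Hn; rewrite dprodN H // oppr0. Qed.

Lemma dsumB (x y : P) : dsum x -> dsum y -> dsum (x - y).
Proof. by move=> Hx Hy; apply: dsumD Hx (dsumN Hy). Qed.

Lemma dsum_sum k (G : 'I_k -> P) : (forall i, dsum (G i)) -> dsum (\sum_(i < k) G i).
Proof.
elim: k G => [|k IH] G HG; first by rewrite big_ord0; exact: dsum0.
rewrite big_ord_recr /=; apply: dsumD => //; exact: IH.
Qed.

Lemma span_dsum (x : P) : span_of (@dsum R F) x -> dsum x.
Proof.
move=> [k [c [w [Hw ->]]]]; apply: dsum_sum => i; exact: dsumZ.
Qed.

Lemma dsum_span (x : P) : dsum x -> span_of (@dsum R F) x.
Proof.
move=> Hx; exists 1%N, (fun _ => 1), (fun _ => x); split => //.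
by rewrite big_ord1 scale1r.
Qed.

Lemma qpi_dsum_eq (x y : P) : dsum (x - y) -> qpi (@dsum R F) x = qpi (@dsum R F) y.
Proof. by move=> H; apply: qpi_eq; apply: dsum_span. Qed.

Lemma qpi_dsum_rel (x y : P) : qpi (@dsum R F) x = qpi (@dsum R F) y -> dsum (x - y).
Proof. by move=> /qpi_rel H; apply: span_dsum. Qed.

End DprodLemmas.
Section Bound.
Variables (A : idomainType) (F : nat -> lmodType A).
Hypothesis noeth : noetherian_ring A.
Local Notation P := (dprod F).

Lemma bound k (p : 'I_k -> P) : exists N, forall c : 'I_k -> A,
  dsum (\sum_(i < k) c i *: p i) -> forall n, (N <= n)%N -> (\sum_(i < k) c i *: p i) n = 0.
Proof.
elim: k p => [|k IH] p.
  by exists 0%N => c _ n _; rewrite big_ord0.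
have [N0 HN0] := IH (fun i => p (widen_ord (leqnSn k) i)).
pose L (a : A) := exists c : 'I_k.+1 -> A, dsum (\sum_(i < k.+1) c i *: p i) /\ c ord_max = a.
have LI : is_ideal L.
  split; first by exists (fun _ => 0); split => //; rewrite big1; [exact: dsum0 | move=> i _; rewrite scale0r].
  split.
    move=> x y [c [Hc <-]] [d [Hd <-]]; exists (fun i => c i + d i); split => //.
    under eq_bigr do rewrite scalerDl.
    by rewrite big_split; apply: dsumD.
  move=> a x [c [Hc <-]]; exists (fun i => a * c i); split => //.
  under eq_bigr do rewrite -scalerA.
  by rewrite -scaler_sumr; apply: dsumZ.
have [s Hs] := noeth LI.
have Ls : forall j : 'I_(size s), L s`_j.
  move=> j; apply/Hs; exists (fun i => (i == j)%:R).
  rewrite (bigD1 j) //= eqxx mul1r big1 ?addr0 // => i /negPf ->; by rewrite mul0r.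
have [w Hw] := choice Ls.
have : forall j : 'I_(size s), exists Nj, forall n, (Nj <= n)%N ->
    (\sum_(i < k.+1) w j i *: p i) n = 0.
  by move=> j; have [[Nj HNj] _] := Hw j; exists Nj.
move=> /choice [Nj HNj].
exists (maxn N0 (\max_(j < size s) Nj j)) => c Hc n Hn.
have HL : L (c ord_max) by exists c.
have [d Hd] := proj1 (Hs _) HL.
pose W j := \sum_(i < k.+1) w j i *: p i.
pose c' i := c i - \sum_(j < size s) d j * w j i.
have E : \sum_(i < k.+1) c i *: p i =
         \sum_(i < k.+1) c' i *: p i + \sum_(j < size s) d j *: W j.
  rewrite /c' /W.
  under [X in _ = X + _]eq_bigr do rewrite scalerBl.
  rewrite sumrB.
  under [X in _ = _ - X + _]eq_bigr do rewrite scaler_suml.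
  rewrite (exchange_big) /=.
  under [X in _ = _ - _ + X]eq_bigr do rewrite scaler_sumr.
  under [X in _ = _ - X + _]eq_bigr do (under eq_bigr do rewrite -scalerA).
  by rewrite subrK.
have Hc' : dsum (\sum_(i < k.+1) c' i *: p i).
  have -> : \sum_(i < k.+1) c' i *: p i = \sum_(i < k.+1) c i *: p i - \sum_(j < size s) d j *: W j.
    by rewrite E addrK.
  apply: dsumB => //; apply: dsum_sum => j; apply: dsumZ.
  by have [] := Hw j.
rewrite E dprodD.
have -> : (\sum_(i < k.+1) c' i *: p i) n = 0.
  move: Hc'; rewrite big_ord_recr /=.
  have -> : c' ord_max = 0.
    rewrite /c' Hd; apply/eqP; rewrite subr_eq0; apply/eqP.
    by apply: eq_bigr => j _; have [_ ->] := Hw j.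
  rewrite scale0r addr0 => Hc'.
  rewrite HN0 // ?addr0; exact: leq_trans (leq_maxl _ _) Hn.
rewrite add0r dprod_sum big1 // => j _.
rewrite dprodZ /W HNj ?scaler0 //.
apply: leq_trans _ (leq_trans (leq_maxr _ _) Hn).
exact: (leq_bigmax_cond j).
Qed.

End Bound.
Section Main.
Variables (A : idomainType) (I : nat -> A -> Prop) (M : lmodType A).
Hypothesis noeth : noetherian_ring A.
Variable s : seq M.
Hypothesis Hs : forall x : M,
    exists c : 'I_(size s) -> A, x = \sum_(i < size s) c i *: s`_i.
Local Notation Q := (fun n => quot_ring_mod (I n)).
Local Notation P := (dprod Q).
Local Notation S := (@dsum A Q).
Local Notation PS := (@qmod A P S).
Variable Phi : forall n, {linear M -> Q n} -> Q n.
Variable Phiinv : forall n, Q n -> {linear M -> Q n}.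
Hypothesis PhiK : forall n, cancel (@Phi n) (@Phiinv n).
Hypothesis PhiinvK : forall n, cancel (@Phiinv n) (@Phi n).
Hypothesis PhiD : forall n (f g h : {linear M -> Q n}), (forall x, h x = f x + g x) ->
       Phi h = Phi f + Phi g.
Hypothesis PhiZ : forall n (a : A) (f h : {linear M -> Q n}), (forall x, h x = a *: f x) ->
       Phi h = a *: Phi f.

Lemma Phi0 n (h : {linear M -> Q n}) : (forall x, h x = 0) -> Phi h = 0.
Proof.
move=> H; have /eqP := @PhiD n h h h (fun x => ltac:(by rewrite H addr0)).
move=> /eqP E; apply: (addrI (Phi h)); by rewrite addr0 -E.
Qed.

Lemma PhiB n (f g h : {linear M -> Q n}) : (forall x, h x = f x - g x) ->
  Phi h = Phi f - Phi g.
Proof.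
move=> H; rewrite (@PhiD n h g f) ?addrK // => x.
by rewrite H subrK.
Qed.

Lemma comp_lin n (g : {linear M -> P}) : linear (fun x => g x n).
Proof. by move=> a x y; rewrite linearP. Qed.

Definition comp n (g : {linear M -> P}) : {linear M -> Q n} := mklin (comp_lin n g).

Definition PhiP (g : {linear M -> P}) : P := fun n => Phi (comp n g).

Lemma gen_bound (g : {linear M -> P}) : (forall x, dsum (g x)) ->
  exists N, forall n, (N <= n)%N -> forall x, g x n = 0.
Proof.
move=> H.
have : forall j : 'I_(size s), exists Nj, forall n, (Nj <= n)%N -> g s`_j n = 0.
  by move=> j; have [Nj HNj] := H s`_j; exists Nj.
move=> /choice [Nj HNj].
exists (\max_(j < size s) Nj j) => n Hn x.
have [c ->] := Hs x.
rewrite linear_sum dprod_sum big1 // => j _.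
rewrite linearZ /= dprodZ HNj ?scaler0 //.
exact: leq_trans (leq_bigmax_cond j _) Hn.
Qed.

Lemma sub_lin (g1 g2 : {linear M -> P}) : linear (fun x => g1 x - g2 x).
Proof. by move=> a x y; rewrite (linearP g1) (linearP g2) scalerBr opprD addrACA. Qed.

Lemma PhiP_indep (g1 g2 : {linear M -> P}) :
  (forall x, qpi S (g1 x) = qpi S (g2 x)) -> qpi S (PhiP g1) = qpi S (PhiP g2).
Proof.
move=> H.
have [N HN] := gen_bound (g := mklin (sub_lin g1 g2)) (fun x => qpi_dsum_rel (H x)).
apply: qpi_dsum_eq; exists N => n Hn.
rewrite dprodB /PhiP -(@PhiB n _ _ (comp n (mklin (sub_lin g1 g2)))) //.
by apply: Phi0 => x; have := HN n Hn x.
Qed.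


Definition trunc N (x : P) : P := fun n => if (N <= n)%N then x n else 0.

Lemma trunc_lin N : linear (trunc N).
Proof.
move=> a x y; apply: dprod_ext => n; rewrite [RHS]dprodD dprodZ /trunc dprodD dprodZ.
by case: ifP => _ //; rewrite scaler0 addr0.
Qed.

Lemma qpi_trunc N x : qpi S (trunc N x) = qpi S x.
Proof.
apply: qpi_dsum_eq; exists N => n Hn.
by rewrite dprodB /trunc Hn subrr.
Qed.

Section Lift.
Variable f : {linear M -> PS}.
Let p (i : 'I_(size s)) : P := qval (f s`_i).

Lemma qpi_p i : qpi S (p i) = f s`_i.
Proof. exact: qvalK. Qed.

Lemma qpi_sum_p (c : 'I_(size s) -> A) :
  qpi S (\sum_(i < size s) c i *: p i) = f (\sum_(i < size s) c i *: s`_i).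
Proof.
rewrite qpi_sum linear_sum; apply: eq_bigr => i _.
by rewrite qpiZ qpi_p linearZ.
Qed.

Let N := projT1 (cid (bound noeth p)).
Let HN := projT2 (cid (bound noeth p)).

Lemma key (c c' : 'I_(size s) -> A) :
  \sum_(i < size s) c i *: s`_i = \sum_(i < size s) c' i *: s`_i ->
  trunc N (\sum_(i < size s) c i *: p i) = trunc N (\sum_(i < size s) c' i *: p i).
Proof.
move=> E.
have Ed : \sum_(i < size s) (c i - c' i) *: p i =
   \sum_(i < size s) c i *: p i - \sum_(i < size s) c' i *: p i.
  by rewrite -sumrB; apply: eq_bigr => i _; rewrite scalerBl.
have Hd : dsum (\sum_(i < size s) (c i - c' i) *: p i).
  have := qpi_sum_p (fun i => c i - c' i).
  have -> : \sum_(i < size s) (c i - c' i) *: s`_i = 0.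
    by rewrite -[RHS](subrr (\sum_(i < size s) c i *: s`_i)) {2}E -sumrB;
       apply: eq_bigr => i _; rewrite scalerBl.
  rewrite linear0 -qpi0 => /qpi_dsum_rel; by rewrite subr0.
apply: dprod_ext => n; rewrite /trunc; case: ifP => // Hn.
have := @HN (fun i => c i - c' i) Hd n Hn; rewrite Ed dprodB => /eqP; rewrite subr_eq0 => /eqP.
exact.
Qed.

Definition coef (x : M) := projT1 (cid (Hs x)).
Lemma coefE x : x = \sum_(i < size s) coef x i *: s`_i.
Proof. exact: (projT2 (cid (Hs x))). Qed.

Definition liftf (x : M) : P := trunc N (\sum_(i < size s) coef x i *: p i).

Lemma liftf_lin : linear liftf.
Proof.
move=> a x y; rewrite /liftf.
rewrite (key (c' := fun i => a * coef x i + coef y i)); last first.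
  rewrite -coefE; under eq_bigr do rewrite scalerDl -scalerA.
  by rewrite big_split -scaler_sumr -!coefE.
rewrite -trunc_lin; congr (trunc N _).
under eq_bigr do rewrite scalerDl -scalerA.
by rewrite big_split -scaler_sumr.
Qed.

Definition liftl : {linear M -> P} := mklin liftf_lin.

Lemma liftlE x : qpi S (liftl x) = f x.
Proof. by rewrite /= /liftf qpi_trunc qpi_sum_p -coefE. Qed.

End Lift.

Lemma lift_ex (f : {linear M -> PS}) :
  exists g : {linear M -> P}, forall x, qpi S (g x) = f x.
Proof. by exists (liftl f); apply: liftlE. Qed.


Definition liftc (f : {linear M -> PS}) : {linear M -> P} := projT1 (cid (lift_ex f)).
Lemma liftcE (f : {linear M -> PS}) x : qpi S (liftc f x) = f x.
Proof. exact: (projT2 (cid (lift_ex f))). Qed.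

Definition Psi (f : {linear M -> PS}) : PS := qpi S (PhiP (liftc f)).

Lemma Psi_lift (f : {linear M -> PS}) (g : {linear M -> P}) : (forall x, qpi S (g x) = f x) ->
  Psi f = qpi S (PhiP g).
Proof. by move=> H; apply: PhiP_indep => x; rewrite H liftcE. Qed.

Lemma add_lin (g1 g2 : {linear M -> P}) : linear (fun x => g1 x + g2 x).
Proof. by move=> a x y; rewrite (linearP g1) (linearP g2) scalerDr addrACA. Qed.

Lemma scale_lin a (g : {linear M -> P}) : linear (fun x => a *: g x).
Proof. by move=> b x y; rewrite linearP scalerDr !scalerA mulrC. Qed.

Lemma PsiD (f g h : {linear M -> PS}) : (forall x, h x = f x + g x) ->
  Psi h = Psi f + Psi g.
Proof.
move=> H.
rewrite (@Psi_lift h (mklin (add_lin (liftc f) (liftc g)))); last first.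
  by move=> x; rewrite /= qpiD !liftcE H.
rewrite /Psi -qpiD; congr (qpi S _); apply: dprod_ext => n.
rewrite dprodD /PhiP; apply: PhiD => x /=; by [].
Qed.

Lemma PsiZ a (f h : {linear M -> PS}) : (forall x, h x = a *: f x) ->
  Psi h = a *: Psi f.
Proof.
move=> H.
rewrite (@Psi_lift h (mklin (scale_lin a (liftc f)))); last first.
  by move=> x; rewrite /= qpiZ !liftcE H.
rewrite /Psi -qpiZ; congr (qpi S _); apply: dprod_ext => n.
rewrite dprodZ /PhiP; apply: PhiZ => x /=; by [].
Qed.

Lemma Ginv_lin (y : P) : linear (fun x : M => (fun n => Phiinv (y n) x) : P).
Proof.
move=> a x z; apply: dprod_ext => n.
by rewrite dprodD dprodZ linearP.
Qed.

Definition Ginv (y : P) : {linear M -> P} := mklin (Ginv_lin y).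

Lemma Psiinv_lin (y : P) : linear (fun x => qpi S (Ginv y x)).
Proof. by move=> a x z; rewrite linearP qpiD qpiZ. Qed.

Definition Psiinv (y : PS) : {linear M -> PS} := mklin (Psiinv_lin (qval y)).

Lemma Psi_bij : bijective Psi.
Proof.
exists Psiinv.
  move=> f; apply: lin_ext => x /=.
  set q := PhiP (liftc f).
  have Hd : dsum (qval (qpi S q) - q) by apply: qpi_dsum_rel; rewrite qvalK.
  have [N HN] := Hd.
  rewrite -liftcE; apply: qpi_dsum_eq; exists N => n Hn.
  rewrite dprodB /=.
  have E : qval (qpi S q) n = q n.
    by apply/eqP; rewrite -subr_eq0; apply/eqP; have := HN n Hn.
  rewrite /= in E; rewrite E /q /PhiP PhiK subrr //.
move=> y; rewrite (@Psi_lift _ (Ginv (qval y))) //.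
rewrite -[RHS]qvalK; congr (qpi S _); apply: dprod_ext => n.
rewrite /PhiP.
have -> : comp n (Ginv (qval y)) = Phiinv (qval y n) by apply: lin_ext.
by rewrite PhiinvK.
Qed.

End Main.

Theorem proposition2p7 (A : idomainType) (m : A -> Prop)
    (I : nat -> A -> Prop) (M : lmodType A) :
  local_ring_with m -> noetherian_ring A -> normal_domain A ->
  (forall n, is_prime_ideal (I n)) ->
  (forall n, exists x, I n x /\ x != 0) ->
  madic_lim0 m I ->
  finitely_generated M ->
  (forall n, hom_iso_self M (quot_ring_mod (I n))) ->
  let P := dprod (fun n => quot_ring_mod (I n)) in
  let S : P -> Prop := @dsum A (fun n => quot_ring_mod (I n)) in
  hom_iso_self M (@qmod A P S).
Proof.
move=> _ noeth _ _ _ _ [s Hs] hiso P S.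
pose Phi n := projT1 (cid (hiso n)).
have HPhi n := projT2 (cid (hiso n)).
have Hinv : forall n, exists g, cancel (Phi n) g /\ cancel g (Phi n).
  by move=> n; have [[g H1 H2] _] := HPhi n; exists g.
pose Phiinv n := projT1 (cid (Hinv n)).
have HK n : cancel (Phi n) (Phiinv n) by exact: (projT2 (cid (Hinv n))).1.
have HKi n : cancel (Phiinv n) (Phi n) by exact: (projT2 (cid (Hinv n))).2.
have HD n : forall f g h : {linear M -> quot_ring_mod (I n)}, (forall x, h x = f x + g x) ->
       Phi n h = Phi n f + Phi n g by have [_ [H _]] := HPhi n.
have HZ n : forall (a : A) (f h : {linear M -> quot_ring_mod (I n)}), (forall x, h x = a *: f x) ->
       Phi n h = a *: Phi n f by have [_ [_ H]] := HPhi n.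
exists (@Psi A I M noeth s Hs Phi); split; last split.
- exact: (@Psi_bij A I M noeth s Hs Phi Phiinv HK HKi HD).
- exact: (@PsiD A I M noeth s Hs Phi HD).
- exact: (@PsiZ A I M noeth s Hs Phi HD HZ).
Qed.
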